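(* Let $p>3$ be a prime. Then $$\sum_{k=0}^{[p/4]}\binom{4k}{2k}\frac1{18^k}\equiv2\Big(\frac6p\Big)-\Big(\frac3p\Big)\pmod p.$$
   Context: $[x]$ is the greatest integer $\le x$; $(\frac{\cdot}{p})$ is the Legendre symbol. *)

(* Defs.v *)
From HB Require Import structures.
From mathcomp Require Import all_boot all_order all_algebra.
Set Implicit Arguments. Unset Strict Implicit. Unset Printing Implicit Defensive.

Definition legendre (a p : nat) : int :=
  if p %| a then 0%R
  else if [exists x : 'I_p, (x * x == a %[mod p])] then 1%R else (-1)%R.

(* Main.v *)
Require Import Defs.
From HB Require Import structures.
From mathcomp Require Import all_boot all_order all_algebra finfield.
From mathcomp Require Import zify ring.
Import GRing.Theory.
Set Implicit Arguments. Unset Strict Implicit.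
Local Open Scope ring_scope.
Lemma p_odd p : prime p -> (3 < p)%N -> p = (p./2).*2.+1.
Proof.
move=> hp hp3; have := even_prime hp; case=> [Hp|Ho]; first by rewrite Hp in hp3.
by rewrite -[LHS]odd_double_half Ho add1n.
Qed.

Lemma h_ge2 p : prime p -> (3 < p)%N -> (2 <= p./2)%N.
Proof. move=> hp hp3; have := p_odd hp hp3; rewrite -!muln2; lia. Qed.

Lemma natF_eq p : prime p -> forall m n, (m%:R : 'F_p) = n%:R -> m = n %[mod p].
Proof. move=> hp m n H; have := congr1 val H. rewrite /= !val_Fp_nat //. Qed.

Lemma natF0 p : prime p -> forall n, (n%:R : 'F_p) = 0 -> (p %| n)%N.
Proof. move=> hp n H; have := @natF_eq p hp n 0 H; rewrite mod0n => H2; by rewrite /dvdn H2. Qed.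

Lemma fermatF p : prime p -> forall y : 'F_p, y != 0 -> y ^+ p.-1 = 1.
Proof.
move=> hp y Hy; have H : y ^+ (p.-1).+1 = y.
  by rewrite (prednK (prime_gt0 hp)) -{2}(expf_card y) card_Fp.
by move: H; rewrite exprS => H2; apply: (mulfI Hy); rewrite H2 mulr1.
Qed.

Lemma sqpow p : prime p -> (3 < p)%N -> forall y : 'F_p, y != 0 -> (y ^+ 2) ^+ p./2 = 1.
Proof.
move=> hp hp3 y Hy; rewrite -exprM -(fermatF hp Hy); congr (_ ^+ _).
by rewrite {2}(p_odd hp hp3) /= -muln2 mulnC.
Qed.

Lemma natF_neq0 p : prime p -> forall i, (0 < i < p)%N -> (i%:R : 'F_p) != 0.
Proof.
move=> hp i /andP [H1 H2]; apply/eqP => /(natF0 hp) /(dvdn_leq H1); by rewrite leqNgt H2.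
Qed.

Lemma euler p (hp : prime p) (hp3 : (3 < p)%N) a :
  ~~ (p %| a)%N -> ((legendre a p)%:~R : 'F_p) = (a%:R : 'F_p) ^+ p./2.
Proof.
move=> Ha; set x := (a%:R : 'F_p).
have xnz : x != 0 by apply/eqP => /(natF0 hp); apply/negP.
have Hpo := p_odd hp hp3.
rewrite /legendre (negbTE Ha); case: existsP => [[x0 Hx0] | Hn].
  have Ey : (x0 : nat)%:R ^+ 2 = x :> 'F_p.
    rewrite -natrX; apply: val_inj; rewrite /= !val_Fp_nat //; exact/eqP.
  rewrite -Ey sqpow //; last first.
    by apply/eqP => E; move: xnz; rewrite -Ey E expr0n.
rewrite intrN.
have H2 : (x ^+ p./2) ^+ 2 = 1 by rewrite exprAC sqpow.
have Hne : x ^+ p./2 != 1.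
  apply/eqP => E.
  pose rs := x :: [seq ((i%:R : 'F_p) ^+ 2) | i <- iota 1 p./2].
  have nz : ('X^(p./2) - 1 : {poly 'F_p}) != 0.
    by rewrite -size_poly_eq0 -polyC1 size_XnsubC // (leq_trans _ (h_ge2 hp hp3)).
  have Hall : all (root ('X^(p./2) - 1)) rs.
    rewrite /= rootE !hornerE E subrr eqxx /=.
    apply/allP => z /mapP [i Hi ->]; rewrite rootE !hornerE sqpow // ?subrr //.
    apply: natF_neq0 => //; move: Hi; rewrite mem_iota; lia.
  have Hu : uniq rs.
    rewrite /= map_inj_in_uniq ?iota_uniq ?andbT.
      apply/mapP => [[i Hi Exi]]; apply: Hn.
      have Hip : (i < p)%N by move: Hi; rewrite mem_iota; lia.
      exists (Ordinal Hip) => /=; apply/eqP; apply: esym; apply: natF_eq => //.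
      by rewrite natrM -expr2 -Exi.
    move=> i j; rewrite !mem_iota => Hi Hj /eqP; rewrite -subr_eq0 subr_sqr mulf_eq0.
    case/orP => /eqP E2.
      move/eqP: E2; rewrite subr_eq0 => /eqP /(natF_eq hp); rewrite !modn_small //; lia.
    by move: E2; rewrite -natrD => /(natF0 hp) /(dvdn_leq (_ : (0 < i + j)%N)) => H; exfalso; lia.
  have := max_poly_roots nz Hall Hu.
  by rewrite -polyC1 size_XnsubC ?(leq_trans _ (h_ge2 hp hp3)) //= size_map size_iota ltnn.
move: H2; move/eqP; rewrite -subr_eq0 -[X in _ - X](expr1n _ 2) subr_sqr mulf_eq0.
case/orP; first by rewrite subr_eq0 (negbTE Hne).
by rewrite addr_eq0 => /eqP ->.
Qed.

Lemma cbin_nat n : (n.+1 * 'C((n.+1).*2, n.+1) = (n.*2.+1).*2 * 'C(n.*2, n))%N.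
Proof.
have E1 := mul_bin_diag (n.*2.+1) n.
have E2 := mul_bin_diag (n.*2.+2) n.
have E3 : 'C(n.*2.+1, n) = 'C(n.*2.+1, n.+1).
  rewrite -(@bin_sub (n.*2.+1) n); last by rewrite -addnn; lia.
  congr 'C(_, _); rewrite -addnn; lia.
move: E1 E2; rewrite /= E3 doubleS.
move: ('C(n.*2, n)) ('C(n.*2.+1, n.+1)) ('C(n.*2.+2, n.+1)) => c1 c2 c3.
rewrite -!muln2; nia.
Qed.

Lemma cbin p (hp : prime p) (hp3 : (3 < p)%N) n :
  (n <= p./2)%N -> ('C(n.*2, n)%:R : 'F_p) = (- 4%:R) ^+ n * 'C(p./2, n)%:R.
Proof.
have Hpo := p_odd hp hp3.
elim: n => [|n IH] Hn; first by rewrite !bin0 expr0 mul1r.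
have Hnz : (n.+1%:R : 'F_p) != 0 by apply: natF_neq0 => //; lia.
apply: (mulfI Hnz); rewrite -natrM cbin_nat natrM IH; last lia.
have := mul_bin_left p./2 n => /(congr1 (fun m => (m%:R : 'F_p))).
rewrite !natrM => E.
rewrite [in RHS]mulrCA E natrB; last lia.
have Hp0 : (p./2)%:R * 2%:R + 1 = 0 :> 'F_p.
  by rewrite -natrM -mulrSr muln2 -Hpo; apply: pchar_Fp_0.
rewrite -!muln2 !natrM mulrSr natrM exprS.
have aux : forall (a b q c : 'F_p), (a * 2%:R + 1) * 2%:R * (q * c) - (- 4%:R) * q * ((b - a) * c) = (2%:R * q * c) * (b * 2%:R + 1).
  by move=> *; ring.
by apply/eqP; rewrite -subr_eq0 aux Hp0 mulr0.
Qed.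

Definition Rm p : 'M['F_p]_2 :=
  \matrix_(i, j) (if (i == 0 :> nat) && (j == 1 :> nat) then 2%:R
                  else if (i == 1 :> nat) && (j == 0 :> nat) then 1 else 0).

Lemma Rm2 p : Rm p ^+ 2 = (2%:R)%:M.
Proof.
apply/matrixP => i j; rewrite expr2 -mulmxE !mxE big_ord_recl big_ord1 !mxE.
case: i => [[|[|i]] Hi]; case: j => [[|[|j]] Hj] //=; rewrite ?mulr0 ?mul0r ?addr0 ?add0r ?mulr1 ?mul1r //.
Qed.

Lemma scal_exp p (a : 'F_p) k : (a%:M : 'M['F_p]_2) ^+ k = (a ^+ k)%:M.
Proof. by rewrite rmorphXn. Qed.

Lemma Rm_even p k : Rm p ^+ (k.*2) = ((2%:R) ^+ k)%:M.
Proof. by rewrite -mul2n exprM Rm2 scal_exp. Qed.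

Lemma Rm_odd p k : Rm p ^+ (k.*2.+1) = ((2%:R) ^+ k)%:M * Rm p.
Proof. by rewrite exprS Rm_even -!mulmxE scalar_mxC. Qed.

Lemma Rm_pow00 p i : (Rm p ^+ i) 0 0 = if odd i then 0 else 2%:R ^+ (i./2).
Proof.
rewrite -{1}(odd_double_half i); case: (odd i) => /=.
  by rewrite add1n Rm_odd -mulmxE mul_scalar_mx !mxE /= mulr0.
by rewrite add0n Rm_even !mxE.
Qed.

Lemma Xexp p n : ((3%:R%:M + 2%:R *: Rm p) ^+ n) 0 0 =
  \sum_(i < n.+1) ('C(n, i)%:R * 3%:R ^+ (n - i) * 2%:R ^+ i *
                   (if odd i then 0 else 2%:R ^+ (i./2))).
Proof.
rewrite exprDn_comm; last first.
  by rewrite /GRing.comm -!mulmxE scalar_mxC.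
rewrite summxE; apply: eq_bigr => i _.
rewrite mulmxnE scal_exp exprZn -mulmxE mul_scalar_mx !mxE Rm_pow00.
rewrite -mulr_natl; ring.
Qed.

Lemma Xval p (hp : prime p) (hp3 : (3 < p)%N) :
  ((3%:R%:M + 2%:R *: Rm p) ^+ p./2) 0 0 = 2%:R * 2%:R ^+ p./2 - 1.
Proof.
have Hpo := p_odd hp hp3.
have pchM : p \in [pchar 'M['F_p]_2].
  rewrite !inE hp /=; apply/eqP.
  by rewrite -scaler_nat pchar_Fp_0 // scale0r.
have E1 : (1 + Rm p) ^+ 2 = 3%:R%:M + 2%:R *: Rm p.
  rewrite expr2 mulrDl !mulrDr !mul1r !mulr1 -expr2 Rm2.
  apply/matrixP => i j; rewrite !mxE.
  case: i => [[|[|i]] Hi]; case: j => [[|[|j]] Hj] //=; rewrite ?mulr0 ?mul0r ?addr0 ?add0r ?mulr1 ?mul1r ?mulr1n ?mulr0n //.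
  ring.
have E2 : (1 + Rm p) ^+ p = 1 + ((2%:R) ^+ p./2)%:M * Rm p.
  rewrite -(pFrobenius_autE pchM) pFrobenius_autD_comm; last by rewrite /GRing.comm mul1r mulr1.
  rewrite !pFrobenius_autE expr1n.
  have -> : Rm p ^+ p = Rm p ^+ (p./2).*2.+1 by rewrite -Hpo.
  by rewrite Rm_odd.
set X := (3%:R%:M + 2%:R *: Rm p) ^+ p./2.
have E3 : X * (1 + Rm p) = 1 + ((2%:R) ^+ p./2)%:M * Rm p.
  by rewrite /X -E1 -exprM -exprSr mul2n -Hpo E2.
have E00 := congr1 (fun M : 'M['F_p]_2 => M 0 0) E3.
have E01 := congr1 (fun M : 'M['F_p]_2 => M 0 1) E3.
move: E00 E01; rewrite /= -!mulmxE mul_scalar_mx !mxE !big_ord_recl !big_ord0 !mxE /=.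
rewrite ?addr0 ?add0r ?mulr1 ?mulr0 ?addr0.
move: (X 0 (lift ord0 ord0)) => b.
have -> : (X 0 0) = X 0 ord0 by [].
move: (X 0 ord0) => a A B.
apply/eqP; rewrite -subr_eq0.
have -> : a - (2%:R * 2%:R ^+ p./2 - 1) = (a * 2%:R + b - 2%:R ^+ p./2 * 2%:R) - (a + b - 1) by ring.
rewrite A B !subrr; exact: eqxx.
Qed.

Lemma sum_even (V : nmodType) (f : nat -> V) N :
  \sum_(i < N.*2) f i = \sum_(k < N) (f k.*2 + f k.*2.+1).
Proof.
elim: N => [|N IH]; first by rewrite !big_ord0.
by rewrite doubleS !big_ord_recr /= IH addrA.
Qed.

Lemma key16 p (hp : prime p) (hp3 : (3 < p)%N) k :
  (16%:R : 'F_p) ^+ k / 18%:R ^+ k * 3%:R ^+ (k.*2) = 2%:R ^+ (k.*2) * 2%:R ^+ k.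
Proof.
have t0 : (2%:R : 'F_p) != 0 by apply: natF_neq0 => //; lia.
have u0 : (3%:R : 'F_p) != 0 by apply: natF_neq0 => //; lia.
set a := (2%:R : 'F_p) ^+ k; set b := (3%:R : 'F_p) ^+ k.
have E16 : (16%:R : 'F_p) ^+ k = a ^+ 4 by rewrite /a -exprM mulnC exprM; congr (_ ^+ _); rewrite -natrX.
have E18 : (18%:R : 'F_p) ^+ k = a * b ^+ 2.
  by rewrite /a /b -exprM mulnC exprM -exprMn; congr (_ ^+ _); rewrite -natrX -natrM.
have E3 : (3%:R : 'F_p) ^+ (k.*2) = b ^+ 2 by rewrite /b -exprM muln2.
have E2 : (2%:R : 'F_p) ^+ (k.*2) = a ^+ 2 by rewrite /a -exprM muln2.
have a0 : a != 0 by rewrite expf_neq0.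
have b0 : b != 0 by rewrite expf_neq0.
rewrite E16 E18 E3 E2.
clear E16 E18 E3 E2; clearbody a b.
by field; rewrite a0 b0.
Qed.

Lemma sum_widen (V : nmodType) (f : nat -> V) n1 n2 : (n1 <= n2)%N ->
  (forall i, (n1 <= i)%N -> f i = 0) -> \sum_(i < n1) f i = \sum_(i < n2) f i.
Proof.
move=> H Hz; rewrite -!(big_mkord xpredT) (big_cat_nat (leq0n n1) H) /=.
rewrite [X in _ + X]big1_seq; first by rewrite addr0.
move=> i /andP[_]; rewrite mem_index_iota => /andP[Hi _].
exact: Hz.
Qed.

Theorem corollary2p11 (p : nat) (hp : prime p) (hp3 : (3 < p)%N) :
  \sum_(0 <= k < (p %/ 4).+1) ('C(4 * k, 2 * k)%:R / (18%:R : 'F_p) ^+ k)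
  = (2 * legendre 6 p - legendre 3 p)%:~R.
Proof.
have Hpo := p_odd hp hp3.
have Hm1 : ((p %/ 4)%N.*2 <= p./2)%N by move: Hpo; rewrite -!muln2; lia.
have Hm2 : (p./2 < (p %/ 4)%N.+1.*2)%N by move: Hpo; rewrite -!muln2; lia.
move: Hm1 Hm2 Hpo; move: (p %/ 4)%N => m Hm1 Hm2 Hpo.
set L := \sum_(0 <= k < m.+1) _.
have EL : L = \sum_(k < m.+1) ('C(p./2, k.*2)%:R * 16%:R ^+ k / (18%:R : 'F_p) ^+ k).
  rewrite /L big_mkord; apply: eq_bigr => [[k Hk]] _ /=.
  rewrite (_ : (4 * k = (k.*2).*2)%N); last by rewrite -!mul2n mulnA.
  rewrite mul2n cbin //; last by move: Hk Hm1; rewrite -!mul2n; lia.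
  have e : (- (4%:R : 'F_p)) ^+ k.*2 = 16%:R ^+ k.
    by rewrite -mul2n exprM sqrrN; congr (_ ^+ _); rewrite -natrX.
  by rewrite e (mulrC (16%:R ^+ k)).
set f := fun i => ('C(p./2, i)%:R * 3%:R ^+ (p./2 - i) * 2%:R ^+ i *
                   (if odd i then 0 else (2%:R : 'F_p) ^+ (i./2))).
have Ec : \sum_(i < p./2.+1) f i = 2%:R * 2%:R ^+ p./2 - 1.
  by rewrite -(Xval hp hp3) Xexp.
have Ec2 : \sum_(i < p./2.+1) f i = \sum_(k < m.+1) f k.*2.
  rewrite (sum_widen (n2 := (m.+1).*2) Hm2); last first.
    by move=> i Hi; rewrite /f bin_small ?mul0r.
  rewrite sum_even; apply: eq_bigr => k _.
  have fodd : f k.*2.+1 = 0 by rewrite /f /= odd_double /= mulr0.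
  by rewrite fodd addr0.
have E3h : L * 3%:R ^+ p./2 = 2%:R * 2%:R ^+ p./2 - 1.
  rewrite -Ec Ec2 EL mulr_suml; apply: eq_bigr => [[k Hk]] _ /=.
  have Hk2 : (k.*2 <= p./2)%N by move: Hk Hm1; rewrite -!mul2n; lia.
  rewrite /f odd_double doubleK.
  have -> : (3%:R : 'F_p) ^+ p./2 = 3%:R ^+ (p./2 - k.*2) * 3%:R ^+ k.*2 by rewrite -exprD subnK.
  rewrite -[RHS]mulrA -(key16 hp hp3 k).
  ring.
have E33 : (3%:R : 'F_p) ^+ p./2 * 3%:R ^+ p./2 = 1.
  have n3 : (3%:R : 'F_p) != 0 by apply: natF_neq0 => //; lia.
  rewrite -exprD addnn.
  have -> : (p./2).*2 = p.-1 by rewrite {2}Hpo.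
  by rewrite (fermatF hp n3).
have EL2 : L = (2%:R * 2%:R ^+ p./2 - 1) * 3%:R ^+ p./2.
  by rewrite -E3h -mulrA E33 mulr1.
rewrite EL2 intrB intrM !euler //.
- have -> : (6%:R : 'F_p) = 2%:R * 3%:R by rewrite -natrM.
  have -> : ((2 : int)%:~R : 'F_p) = 2%:R by [].
  rewrite exprMn; ring.
- by apply/negP => /(dvdn_leq (isT : (0 < 3)%N)); lia.
- apply/negP; rewrite (_ : 6 = 2 * 3)%N // Euclid_dvdM //.
  by case/orP => [/(dvdn_leq (isT : (0 < 2)%N))|/(dvdn_leq (isT : (0 < 3)%N))]; lia.
Qed.
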